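(* Let $L$ be a frame. Then $$\mathsf R(L)=\mathrm{Int}(\mathsf{Cl}(L))=\mathcal B(\mathsf{Ex}(L))=\mathcal B(\mathsf{SE}(L))=\mathcal B(\mathsf{Filt}(L))$$ and $$\{\mathrm{fit}(S)\mid S\in\mathcal S_c(L)\}=\mathcal B(\{\mathrm{fit}(S)\mid S\in\mathcal S_b(L)\})=\mathcal B(\mathcal S_o(L)).$$
   Context: A frame is a complete lattice $L$ with $(\bigvee A)\wedge b=\bigvee_{a\in A}(a\wedge b)$, Heyting implication $\to$. For a coframe $C$ with top $1$ and co-Heyting difference $\setminus$ ($a\setminus b\le c$ iff $a\le b\vee c$), its Booleanization is $\mathcal B(C)=\{1\setminus c\mid c\in C\}$. Filters are nonempty up-closed subsets closed under finite meets; $\mathsf{Filt}(L)$ is ordered by reverse inclusion and is a coframe with joins = intersections, top $\{1\}$, and $H\setminus G=\{a\mid\forall b\in G,\ b\vee a\in H\}$. $\mathsf{Cl}(L)=\{\{x\mid x\vee a=1\}\mid a\in L\}$; $\mathsf R(L)=\{\{1\}\setminus G\mid G\in\mathsf{Filt}(L)\}$; $\mathrm{Int}(\mathcal F)$ = intersections of subfamilies (empty $=L$). $\mathfrak o(a)=\{a\to b\mid b\in L\}$. $\mathsf{Ex}(L)$: filters closed under exact meets ($(\bigwedge M)\vee b=\bigwedge_{a\in M}(a\vee b)$ for all $b$); $\mathsf{SE}(L)$: filters closed under strongly exact meets ($\bigcap_{a\in M}\mathfrak o(a)=\mathfrak o(\bigwedge M)$); both are coframes under reverse inclusion (subcolocales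 of $\mathsf{Filt}(L)$). Sublocales: subsets closed under all meets with $a\to s\in S$; they form the coframe $\mathsf{Sl}(L)$ under inclusion. $\mathrm{fit}(S)=\bigcap\{\mathfrak o(a)\mid S\subseteq\mathfrak o(a)\}$; $\mathcal S_o(L)$ is the coframe (under inclusion) of fitted sublocales (intersections of open sublocales), with joins $\mathrm{fit}$ of $\mathsf{Sl}(L)$-joins. $\mathcal S_c(L)$: joins of closed sublocales $\mathfrak c(a)={\uparrow}a$; $\mathcal S_b(L)$: joins of sublocales $\mathfrak c(x)\cap\mathfrak o(y)$. $\{\mathrm{fit}(S)\mid S\in\mathcal S_b(L)\}$ is a coframe under inclusion (a subcolocale of $\mathcal S_o(L)$). *)

(* Defs.v *)
(* frames as complete lattices given by a sup operator on
   predicates, satisfying the frame distributive law.  Subsets of L are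
   predicates [L -> Prop]; families of subsets are predicates on those. *)

Set Implicit Arguments.

Record Frame := {
  car :> Type;
  le : car -> car -> Prop;
  le_refl : forall x, le x x;
  le_trans : forall x y z, le x y -> le y z -> le x z;
  le_antisym : forall x y, le x y -> le y x -> x = y;
  sup : (car -> Prop) -> car;
  sup_ub : forall (A : car -> Prop) a, A a -> le a (sup A);
  sup_least : forall (A : car -> Prop) u, (forall a, A a -> le a u) -> le (sup A) u;
  (* frame law (distributivity), stated with the lattice operations derived
     from [sup] below (written out here) *)
  frame_distr : forall (A : car -> Prop) (b : car),
    sup (fun x => forall m, (m = sup A \/ m = b) -> le x m)
    = sup (fun y => exists a, A a /\
             y = sup (fun x => forall m, (m = a \/ m = b) -> le x m))
}.

Section FrameOps.
Variable L : Frame.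

Definition top : L := sup L (fun _ => True).
Definition join (a b : L) : L := sup L (fun x => x = a \/ x = b).
Definition inf (M : L -> Prop) : L := sup L (fun x => forall m, M m -> le L x m).
Definition meet (a b : L) : L := inf (fun m => m = a \/ m = b).
Definition imp (a b : L) : L := sup L (fun x => le L (meet x a) b).

Definition is_filter (F : L -> Prop) : Prop :=
  (exists x, F x) /\
  (forall x y, F x -> le L x y -> F y) /\
  (forall x y, F x -> F y -> F (meet x y)).

Definition opn (a : L) : L -> Prop := fun x => exists b, x = imp a b.
Definition cls (a : L) : L -> Prop := fun x => le L a x.

Definition exact_set (M : L -> Prop) : Prop :=
  forall b, join (inf M) b = inf (fun y => exists a, M a /\ y = join a b).
Definition strongly_exact_set (M : L -> Prop) : Prop :=
  forall x, (forall a, M a -> opn a x) <-> opn (inf M) x.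

Definition Filt : (L -> Prop) -> Prop := is_filter.
Definition Ex : (L -> Prop) -> Prop := fun F =>
  is_filter F /\ forall M, (forall a, M a -> F a) -> exact_set M -> F (inf M).
Definition SE : (L -> Prop) -> Prop := fun F =>
  is_filter F /\ forall M, (forall a, M a -> F a) -> strongly_exact_set M -> F (inf M).

Definition Cl : (L -> Prop) -> Prop := fun S =>
  exists a, S = (fun x => join x a = top).
(* R(L) = { {1} \ G | G filter },  {1} \ G = { a | forall b in G, b \/ a = 1 } *)
Definition Rfam : (L -> Prop) -> Prop := fun S =>
  exists G, is_filter G /\ S = (fun a => forall b, G b -> join b a = top).

Definition is_sublocale (S : L -> Prop) : Prop :=
  (forall M, (forall x, M x -> S x) -> S (inf M)) /\
  (forall a s, S s -> S (imp a s)).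

Definition sl_join (Fam : (L -> Prop) -> Prop) : L -> Prop := fun x =>
  forall T, is_sublocale T ->
    (forall S, Fam S -> forall y, S y -> T y) -> T x.

Definition fitted : (L -> Prop) -> Prop := fun S =>
  exists A : L -> Prop, S = (fun x => forall a, A a -> opn a x).

Definition fit (S : L -> Prop) : L -> Prop := fun x =>
  forall a, (forall y, S y -> opn a y) -> opn a x.

Definition Sc : (L -> Prop) -> Prop := fun S =>
  exists A : L -> Prop, S = sl_join (fun T => exists a, A a /\ T = cls a).
Definition Sb : (L -> Prop) -> Prop := fun S =>
  exists I : L -> L -> Prop,
    S = sl_join (fun T => exists x y, I x y /\ T = (fun z => cls x z /\ opn y z)).

Definition fit_image (Fam : (L -> Prop) -> Prop) : (L -> Prop) -> Prop :=
  fun T => exists S, Fam S /\ T = fit S.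

End FrameOps.

Definition Int {X : Type} (F : (X -> Prop) -> Prop) : (X -> Prop) -> Prop :=
  fun S => exists Fs : (X -> Prop) -> Prop,
    (forall T, Fs T -> F T) /\ S = (fun x => forall T, Fs T -> T x).

Definition incl {X : Type} (S T : X -> Prop) : Prop := forall x, S x -> T x.
Definition rev_incl {X : Type} (S T : X -> Prop) : Prop := forall x, T x -> S x.

(* Order-theoretic Booleanization of a coframe (C, le):
   B(C) = { 1 \ c | c in C }, where 1 is the top of C and
   a \ b is the least c in C with a <= b \/_C c (join taken in C). *)
Section Boolz.
Variables (X : Type) (le : X -> X -> Prop) (C : X -> Prop).

Definition is_top (t : X) : Prop := C t /\ forall y, C y -> le y t.
Definition is_join (a b j : X) : Prop :=
  C j /\ le a j /\ le b j /\ forall y, C y -> le a y -> le b y -> le j y.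
Definition is_diff (a b d : X) : Prop :=
  C d /\ (exists j, is_join b d j /\ le a j) /\
  forall c, C c -> (exists j, is_join b c j /\ le a j) -> le d c.
Definition Booleanization : X -> Prop := fun x =>
  exists t c, is_top t /\ C c /\ is_diff t c x.
End Boolz.

(* Main.v *)
Require Import Defs.
From Stdlib Require Import FunctionalExtensionality PropExtensionality.

Lemma pred_ext {X : Type} (P Q : X -> Prop) : (forall x, P x <-> Q x) -> P = Q.
Proof. intro H; apply functional_extensionality; intro x; apply propositional_extensionality; apply H. Qed.

Section Pf.
Variable L : Frame.
Notation le := (le L).
Notation top := (top L).
Notation join := (join L).
Notation meet := (meet L).
Notation inf := (inf L).
Notation imp := (imp L).
Notation opn := (opn L).
Notation cls := (cls L).
Notation fit := (fit L).

Lemma le_top x : le x top. Proof. unfold Defs.top; apply sup_ub; exact I. Qed.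
Lemma top_eq x : le top x -> x = top. Proof. intro; apply le_antisym; auto using le_top. Qed.
Lemma join_ubl a b : le a (join a b). Proof. unfold Defs.join; apply sup_ub; auto. Qed.
Lemma join_ubr a b : le b (join a b). Proof. unfold Defs.join; apply sup_ub; auto. Qed.
Lemma join_lub a b c : le a c -> le b c -> le (join a b) c.
Proof. intros; unfold Defs.join; apply sup_least; intros x [-> | ->]; auto. Qed.
Lemma join_comm a b : join a b = join b a.
Proof. apply le_antisym; apply join_lub; auto using join_ubl, join_ubr. Qed.
Lemma join_idem a : join a a = a.
Proof. apply le_antisym; [apply join_lub; apply le_refl| apply join_ubl]. Qed.
Lemma inf_lb (M : L -> Prop) m : M m -> le (inf M) m.
Proof. intro; unfold Defs.inf; apply sup_least; intros x Hx; apply Hx; auto. Qed.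
Lemma inf_glb (M : L -> Prop) u : (forall m, M m -> le u m) -> le u (inf M).
Proof. intro; unfold Defs.inf; apply sup_ub; auto. Qed.
Lemma meet_lbl a b : le (meet a b) a. Proof. apply inf_lb; auto. Qed.
Lemma meet_lbr a b : le (meet a b) b. Proof. apply inf_lb; auto. Qed.
Lemma meet_glb a b c : le c a -> le c b -> le c (meet a b).
Proof. intros; apply inf_glb; intros m [-> | ->]; auto. Qed.
Lemma meet_mono x y a : le x y -> le (meet x a) (meet y a).
Proof. intro; apply meet_glb; [eapply le_trans; [apply meet_lbl|auto] | apply meet_lbr]. Qed.

Lemma distr_le x y z : le (meet (join y z) x) (join (meet y x) (meet z x)).
Proof.
  assert (E : meet (join y z) x = sup L (fun w => exists a, (a = y \/ a = z) /\ w = meet a x))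
    by exact (frame_distr L (fun w => w = y \/ w = z) x).
  rewrite E; apply sup_least; intros w [a [[-> | ->] ->]]; [apply join_ubl | apply join_ubr].
Qed.

Lemma imp_intro x a b : le (meet x a) b -> le x (imp a b).
Proof. intro; unfold Defs.imp; apply sup_ub; auto. Qed.
Lemma imp_elim a b : le (meet (imp a b) a) b.
Proof.
  assert (E : meet (imp a b) a = sup L (fun y => exists c, le (meet c a) b /\ y = meet c a))
    by exact (frame_distr L (fun x => le (meet x a) b) a).
  rewrite E; apply sup_least; intros y [c [Hc ->]]; exact Hc.
Qed.

Lemma L1 z w y : join z w = top -> le z y -> opn w y.
Proof.
  intros H Hzy. exists y. apply le_antisym.
  - apply imp_intro, meet_lbl.
  - set (h := imp w y).
    apply le_trans with (meet (join z w) h).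
    + apply meet_glb; [rewrite H; apply le_top | apply le_refl].
    +
      assert (Hm : le (meet (join z w) h) (meet (join z w) h)) by apply le_refl.
      apply le_trans with (meet (join z w) h); [apply le_refl|].
      eapply le_trans; [apply distr_le|].
      apply join_lub.
      * eapply le_trans; [apply meet_lbl | exact Hzy].
      * apply le_trans with (meet h w).
        -- apply meet_glb; [apply meet_lbr | apply meet_lbl].
        -- apply imp_elim.
Qed.

Lemma L2 a y : opn a y -> le a y -> y = top.
Proof.
  intros [b ->] H. apply top_eq. apply imp_intro.
  apply le_trans with a; [apply meet_lbr|].
  apply le_trans with (meet (imp a b) a); [apply meet_glb; auto; apply le_refl| apply imp_elim].
Qed.

Lemma opn_top z : opn top z.
Proof.
  exists z. apply le_antisym.
  - apply imp_intro, meet_lbl.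
  - apply le_trans with (meet (imp top z) top); [apply meet_glb; [apply le_refl|apply le_top]|apply imp_elim].
Qed.

Lemma opn_fix a y : opn a y -> imp a y = y.
Proof.
  intros [b ->]. apply le_antisym.
  - apply imp_intro. apply le_trans with (meet (imp a b) a).
    + apply meet_glb; [apply imp_elim| apply meet_lbr].
    + apply imp_elim.
  - apply imp_intro, meet_lbl.
Qed.
Arguments opn_fix {a y}.

Lemma opn_mono a a' y : le a a' -> opn a y -> opn a' y.
Proof.
  intros Ha Hy. exists y. apply le_antisym; [apply imp_intro, meet_lbl|].
  destruct Hy as [b Eb]. rewrite Eb at 2. apply imp_intro.
  apply le_trans with (meet y a).
  - apply meet_glb; [| apply meet_lbr].
    apply le_trans with (meet (imp a' y) a'); [apply meet_glb; [apply meet_lbl| eapply le_trans; [apply meet_lbr|exact Ha]]|apply imp_elim].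
  - rewrite Eb; apply imp_elim.
Qed.

Lemma opn_subloc a : is_sublocale L (opn a).
Proof.
  split.
  - intros M HM. exists (inf M). apply le_antisym; [apply imp_intro, meet_lbl|].
    apply inf_glb; intros m Hm. rewrite <- (opn_fix (HM m Hm)).
    apply imp_intro. eapply le_trans; [apply imp_elim|]. apply inf_lb; auto.
  - intros a' s Hs. exists (imp a' s). apply le_antisym; [apply imp_intro, meet_lbl|].
    set (h := imp a (imp a' s)). apply imp_intro.
    apply le_trans with (imp a s); [| rewrite (opn_fix Hs); apply le_refl].
    apply imp_intro.
    apply le_trans with (meet (imp a' s) a'); [|apply imp_elim].
    apply meet_glb.
    + apply le_trans with (meet h a); [|apply imp_elim].
      apply meet_glb; [eapply le_trans; apply meet_lbl| apply meet_lbr].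
    + eapply le_trans; [apply meet_lbl| apply meet_lbr].
Qed.

Definition Dd (X : L -> Prop) : L -> Prop := fun a => forall b, X b -> join b a = top.
Definition Op (A : L -> Prop) : L -> Prop := fun x => forall a, A a -> opn a x.

Lemma sub_DD (X : L -> Prop) x : X x -> Dd (Dd X) x.
Proof. intros Hx b Hb. rewrite join_comm. apply Hb; auto. Qed.
Lemma D_anti (X Y : L -> Prop) : (forall x, X x -> Y x) -> forall a, Dd Y a -> Dd X a.
Proof. intros H a Ha b Hb; apply Ha; auto. Qed.
Lemma DDD (X : L -> Prop) : Dd (Dd (Dd X)) = Dd X.
Proof.
  apply pred_ext; intro a; split.
  - apply D_anti. intros; apply sub_DD; auto.
  - apply sub_DD.
Qed.

Lemma D_filter X : is_filter L (Dd X).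
Proof.
  split; [|split].
  - exists top. intros b _. apply top_eq, join_ubr.
  - intros a a' Ha Hle b Hb. apply top_eq. rewrite <- (Ha b Hb). apply join_lub; [apply join_ubl|].
    eapply le_trans; [exact Hle| apply join_ubr].
  - intros a a' Ha Ha' b Hb. apply top_eq. rewrite <- (Ha' b Hb).
    apply join_lub; [apply join_ubl|].
    apply le_trans with (meet (join b a) a').
    + apply meet_glb; [rewrite (Ha b Hb); apply le_top| apply le_refl].
    + eapply le_trans; [apply distr_le|]. apply join_lub.
      * eapply le_trans; [apply meet_lbl| apply join_ubl].
      * apply join_ubr.
Qed.

Lemma filter_top G : is_filter L G -> G top.
Proof. intros [[x Hx] [Hu _]]. eapply Hu; eauto using le_top. Qed.

Lemma filter_inter G H : is_filter L G -> is_filter L H -> is_filter L (fun z => G z /\ H z).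
Proof.
  intros HG HH. split; [|split].
  - exists top; split; apply filter_top; auto.
  - intros x y [] Hxy; destruct HG as [_ [HG _]]; destruct HH as [_ [HH _]]; split; eauto.
  - intros x y [] []; destruct HG as [_ [_ HG]]; destruct HH as [_ [_ HH]]; split; auto.
Qed.

Lemma filter_one : is_filter L (fun x => x = top).
Proof.
  split; [|split].
  - exists top; auto.
  - intros x y -> H; apply top_eq; auto.
  - intros x y -> ->. apply top_eq. apply meet_glb; apply le_refl.
Qed.

Definition R2 : (L -> Prop) -> Prop := fun S => exists X, S = Dd X.
Definition T2 : (L -> Prop) -> Prop := fun S => exists A, S = Op (Dd A).

Section BF.
Variable C : (L -> Prop) -> Prop.
Hypothesis Ca : forall G, C G -> is_filter L G.
Hypothesis Cb : C (fun x => x = top).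
Hypothesis Cc : forall G H, C G -> C H -> C (fun z => G z /\ H z).
Hypothesis Cd : forall X, C (Dd X).

Lemma join_ex t c c' : C c -> C c' -> t top -> (forall z, c z -> c' z -> z = top) ->
  exists j, is_join rev_incl C c c' j /\ rev_incl t j.
Proof.
  intros Hc Hc' Ht H. exists (fun z => c z /\ c' z). split.
  - split; [auto|split; [|split]].
    + intros x []; auto.
    + intros x []; auto.
    + intros y Cy H1 H2 x Hx; split; auto.
  - intros x [Hx Hx']. rewrite (H x Hx Hx'); auto.
Qed.

Lemma join_use t c c' j : C c -> C c' -> (forall x, t x -> x = top) ->
  is_join rev_incl C c c' j -> rev_incl t j -> forall a b, c b -> c' a -> join b a = top.
Proof.
  intros Cc0 Cc1 Ht [Cj [_ [_ Hl]]] Htj a b Hb Ha.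
  pose proof (Ca _ Cc0) as Fc; pose proof (Ca _ Cc1) as Fc'.
  apply Ht, Htj. apply (Hl (fun z => c z /\ c' z)).
  - apply Cc; auto.
  - intros x []; auto.
  - intros x []; auto.
  - destruct Fc as [_ [Uc _]]; destruct Fc' as [_ [Uc' _]]. split.
    + eapply Uc; [exact Hb| apply join_ubl].
    + eapply Uc'; [exact Ha| apply join_ubr].
Qed.

Lemma Bool_filt : Booleanization rev_incl C = R2.
Proof.
  apply pred_ext; intro S; split.
  - intros (t & c & [Ct Htop] & Cc0 & [CS [[j [Hj Hjt]] Hleast]]).
    assert (Ht : forall x, t x -> x = top) by exact (Htop _ Cb).
    exists c. apply pred_ext; intro a; split.
    + intros Sa b cb. exact (join_use _ _ _ _ Cc0 CS Ht Hj Hjt _ _ cb Sa).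
    + intro Da. apply (Hleast (Dd c) (Cd c)); auto.
      apply join_ex; auto.
      * apply filter_top, Ca; auto.
      * intros z cz dz. rewrite <- (join_idem z). apply dz; auto.
  - intros [X ->]. exists (fun x => x = top), (Dd (Dd X)).
    split; [split; [exact Cb| intros y Cy x ->; apply filter_top, Ca; auto]|].
    split; [apply Cd|].
    split; [apply Cd|]. split.
    + apply join_ex; auto. intros z cz dz. rewrite <- (join_idem z).
      apply (sub_DD (Dd X)); auto. 
    + intros c' Cc' [j [Hj Hjt]] a c'a.
      assert (Ht : forall x : L, x = top -> x = top) by auto.
      rewrite <- DDD. intros b Hb. exact (join_use _ _ _ _ (Cd _) Cc' Ht Hj Hjt _ _ Hb c'a).
Qed.
End BF.

Lemma Rfam_eq : Rfam L = R2.
Proof.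
  apply pred_ext; intro S; split.
  - intros [G [_ ->]]. exists G. reflexivity.
  - intros [X ->]. exists (Dd (Dd X)). split; [apply D_filter|].
    change (Dd X = Dd (Dd (Dd X))). rewrite DDD. reflexivity.
Qed.

Lemma Int_eq : Int (Cl L) = R2.
Proof.
  apply pred_ext; intro S; split.
  - intros [Fs [HFs ->]].
    exists (fun a => exists T, Fs T /\ T = (fun x => join x a = top)).
    apply pred_ext; intro x; split.
    + intros H b [T [FT ->]]. rewrite join_comm. exact (H _ FT).
    + intros H T FT. destruct (HFs T FT) as [a ->].
      rewrite join_comm. apply H. eauto.
  - intros [X ->]. exists (fun T => exists b, X b /\ T = (fun x => join x b = top)).
    split.
    + intros T [b [_ ->]]. exists b. reflexivity.
    + apply pred_ext; intro x; split.
      * intros H T [b [Xb ->]]. rewrite join_comm. auto.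
      * intros H b Xb. rewrite join_comm. apply (H (fun x => join x b = top)). eauto.
Qed.

Lemma one_closed (M : L -> Prop) : (forall a, M a -> a = top) -> inf M = top.
Proof. intro H. apply top_eq, inf_glb. intros m Hm. rewrite (H m Hm). apply le_refl. Qed.

Lemma Ex_eq : Booleanization rev_incl (Ex L) = R2.
Proof.
  apply Bool_filt.
  - intros G [HG _]; exact HG.
  - split; [apply filter_one|]. intros M HM _. apply one_closed; auto.
  - intros G H [FG HG] [FH HH]. split; [apply filter_inter; auto|].
    intros M HM Hex. split; [apply HG|apply HH]; auto; intros a Ma; apply HM; auto.
  - intro X. split; [apply D_filter|]. intros M HM Hex b Xb.
    rewrite join_comm, (Hex b). apply one_closed. intros y [a [Ma ->]].
    rewrite join_comm. apply HM; auto.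
Qed.

Lemma SE_eq : Booleanization rev_incl (SE L) = R2.
Proof.
  apply Bool_filt.
  - intros G [HG _]; exact HG.
  - split; [apply filter_one|]. intros M HM _. apply one_closed; auto.
  - intros G H [FG HG] [FH HH]. split; [apply filter_inter; auto|].
    intros M HM Hex. split; [apply HG|apply HH]; auto; intros a Ma; apply HM; auto.
  - intro X. split; [apply D_filter|]. intros M HM Hse b Xb.
    apply (L2 (inf M)); [| apply join_ubr].
    apply (proj1 (Hse _)). intros a Ma. apply (L1 b); [apply HM; auto| apply join_ubl].
Qed.

Lemma Filt_eq : Booleanization rev_incl (Filt L) = R2.
Proof.
  apply Bool_filt.
  - auto.
  - apply filter_one.
  - intros; apply filter_inter; auto.
  - intro; apply D_filter.
Qed.

Lemma opn_self a : opn a a -> a = top.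
Proof. intro H; apply (L2 a a H (le_refl L a)). Qed.

Lemma fit_sub (X : L -> Prop) a : (forall y, fit X y -> opn a y) <-> (forall y, X y -> opn a y).
Proof.
  split.
  - intros H y Xy. apply H. intros b Hb. apply Hb; auto.
  - intros H y Hy. apply Hy; auto.
Qed.

Lemma sl_join_sub (Fam : (L -> Prop) -> Prop) a :
  (forall y, sl_join L Fam y -> opn a y) <-> (forall T, Fam T -> forall y, T y -> opn a y).
Proof.
  split.
  - intros H T FT y Ty. apply H. intros T' _ HT'. eapply HT'; eauto.
  - intros H y Hy. apply Hy; [apply opn_subloc| exact H].
Qed.

Lemma fitD (X A : L -> Prop) : (forall a, (forall y, X y -> opn a y) <-> Dd A a) -> fit X = Op (Dd A).
Proof.
  intro H. apply pred_ext; intro z; split.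
  - intros Hz a Ha. apply Hz, H, Ha.
  - intros Hz a Ha. apply Hz, H, Ha.
Qed.

Lemma fit_ext (X Y : L -> Prop) : (forall a, (forall y, X y -> opn a y) <-> (forall y, Y y -> opn a y)) -> fit X = fit Y.
Proof.
  intro H. apply pred_ext; intro z; split.
  - intros Hz a Ha. apply Hz, H, Ha.
  - intros Hz a Ha. apply Hz, H, Ha.
Qed.

Lemma cls_sub x a : (forall y, cls x y -> opn a y) <-> join x a = top.
Proof.
  split.
  - intro H. apply (L2 a); [apply H, join_ubl| apply join_ubr].
  - intros H y Hy. exact (L1 x a y H Hy).
Qed.

Lemma Op_D_P (A : L -> Prop) a : (forall y, Op (Dd A) y -> opn a y) -> Dd A a.
Proof.
  intros H z Az. apply (L2 a); [| apply join_ubr].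
  apply H. intros w Dw. apply (L1 z w); [apply Dw; auto| apply join_ubl].
Qed.

Section BI.
Variable C : (L -> Prop) -> Prop.
Hypothesis f1 : forall S, C S -> fitted L S.
Hypothesis f2 : C (fun _ => True).
Hypothesis f3 : forall S T, C S -> C T -> C (fit (fun z => S z \/ T z)).
Hypothesis f4 : forall A, C (Op (Dd A)).

Lemma fit_le (X : L -> Prop) y : C y -> (forall z, X z -> y z) -> forall z, fit X z -> y z.
Proof.
  intros Cy H z Hz. destruct (f1 _ Cy) as [B ->]. intros b Bb. apply Hz.
  intros w Xw. apply H; auto.
Qed.

Lemma joinJ t c c' : (forall z, t z) -> C c -> C c' ->
  ((exists j, is_join incl C c c' j /\ incl t j) <->
   (forall a, (forall y, c y \/ c' y -> opn a y) -> a = top)).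
Proof.
  intros Ht Cc Cc'. split.
  - intros [j [[Cj [cj [c'j lj]]] tj]] a Ha.
    apply opn_self.
    assert (Hf : forall z, j z -> fit (fun z => c z \/ c' z) z).
    { apply lj; [apply f3; auto| |]; intros x Hx y Hy; apply Hy; auto. }
    apply (Hf a (tj a (Ht a))). exact Ha.
  - intro H. exists (fit (fun z => c z \/ c' z)). split.
    + split; [apply f3; auto|]. split; [|split].
      * intros x Hx y Hy; apply Hy; auto.
      * intros x Hx y Hy; apply Hy; auto.
      * intros y Cy H1 H2 z Hz. refine (fit_le _ y Cy _ z Hz). intros w [Hw|Hw]; auto.
    + intros z _ a Ha. rewrite (H a Ha). apply opn_top.
Qed.

Lemma Pchar (A x : L -> Prop) :
  (forall a, (forall y, Op A y \/ x y -> opn a y) -> a = top) <->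
  (forall a, (forall y, x y -> opn a y) -> Dd A a).
Proof.
  split.
  - intros H a Ha z Az. apply H. intros y [Hy|Hy].
    + apply (opn_mono z); [apply join_ubl| apply Hy; auto].
    + apply (opn_mono a); [apply join_ubr| apply Ha; auto].
  - intros H a Ha. apply opn_self. apply Ha. left.
    intros z Az. apply (L1 a z); [| apply le_refl].
    rewrite join_comm. apply (H a); auto.
Qed.

Lemma minim (A x : L -> Prop) : C x -> (forall a, (forall y, x y -> opn a y) -> Dd A a) ->
  forall z, Op (Dd A) z -> x z.
Proof.
  intros Cx H z Hz. destruct (f1 _ Cx) as [B ->]. intros b Bb.
  apply Hz, H. intros y Hy; apply Hy; auto.
Qed.

Lemma Bool_fit : Booleanization incl C = T2.
Proof.
  apply pred_ext; intro S; split.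
  - intros (t & c & [Ct Htop] & Cc0 & [CS [HJ Hleast]]).
    assert (Ht : forall z, t z) by (intro z; apply (Htop _ f2); exact I).
    destruct (f1 _ Cc0) as [A ->]. exists A.
    apply pred_ext; intro z; split.
    + intro Sz. apply (Hleast (Op (Dd A)) (f4 A)); auto.
      apply joinJ; auto. apply Pchar. apply Op_D_P.
    + refine (minim A S CS _ z). apply Pchar. apply (joinJ _ _ _ Ht Cc0 CS). exact HJ.
  - intros [A ->]. rewrite <- DDD.
    exists (fun _ => True), (Op (Dd (Dd A))).
    split; [split; [exact f2| intros y _ z _; exact I]|].
    split; [apply f4|].
    split; [apply f4|]. split.
    + apply joinJ; auto. apply Pchar. apply Op_D_P.
    + intros c' Cc' HJ z Hz. refine (minim (Dd (Dd A)) c' Cc' _ z Hz). apply Pchar.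
      apply (joinJ _ _ _ (fun _ => I) (f4 _) Cc'). exact HJ.
Qed.
End BI.

Lemma fitted_eq : Booleanization incl (fitted L) = T2.
Proof.
  apply Bool_fit; auto.
  - exists (fun _ => False). apply pred_ext; intro; split; [intros _ a [] | auto].
  - intros S T _ _. exists (fun a => forall y, (S y \/ T y) -> opn a y). reflexivity.
  - intros A. exists (Dd A). reflexivity.
Qed.

Definition famI (I : L -> L -> Prop) : (L -> Prop) -> Prop :=
  fun T => exists x y, I x y /\ T = (fun z => cls x z /\ opn y z).

Lemma Sb_fitD (A : L -> Prop) :
  fit (sl_join L (famI (fun x y => A x /\ y = top))) = Op (Dd A).
Proof.
  apply fitD. intro a. rewrite sl_join_sub. split.
  - intros H x Ax. apply cls_sub. intros y Hy.
    apply (H (fun z => cls x z /\ opn top z)); [|split; auto; apply opn_top].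
    exists x, top; auto.
  - intros H T [x [y [[Ax ->] ->]]] z [cz _]. apply (cls_sub x a); auto.
Qed.

Lemma Sb_eq : Booleanization incl (fit_image L (Sb L)) = T2.
Proof.
  apply Bool_fit.
  - intros S [S' [_ ->]]. exists (fun a => forall y, S' y -> opn a y). reflexivity.
  - assert (E : Op (Dd (fun x => x = sup L (fun _ => False))) = (fun _ => True)).
    { apply pred_ext; intro z; split; auto. intros _ a Ha.
      assert (Ea : join (sup L (fun _ => False)) a = a).
      { apply le_antisym; [apply join_lub; [apply sup_least; intros ? []| apply le_refl]| apply join_ubr]. }
      pose proof (Ha _ eq_refl) as Hj. rewrite Ea in Hj. rewrite Hj. apply opn_top. }
    rewrite <- E. eexists; split; [exists (fun x y => x = sup L (fun _ => False) /\ y = top); reflexivity| symmetry; apply Sb_fitD].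
  - intros S T [S1 [[I1 ->] ->]] [S2 [[I2 ->] ->]].
    exists (sl_join L (famI (fun x y => I1 x y \/ I2 x y))). split; [exists (fun x y => I1 x y \/ I2 x y); reflexivity|].
    apply fit_ext. intro a. rewrite sl_join_sub. split.
    + intros H T [x [y [[Hi|Hi] ->]]] z Hz; apply H; [left|right]; intros b Hb; apply Hb;
        intros T' _ HT'; apply (HT' (fun z => cls x z /\ opn y z)); auto; exists x, y; auto.
    + intros H w [Hw|Hw]; revert w Hw; apply (proj2 (fit_sub _ a)); apply (proj2 (sl_join_sub _ a));
        intros T [x [y [Hi ->]]]; apply H; exists x, y; auto.
  - intro A. eexists; split; [exists (fun x y => A x /\ y = top); reflexivity| symmetry; apply Sb_fitD].
Qed.

Lemma Sc_eq : fit_image L (Sc L) = T2.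
Proof.
  apply pred_ext; intro T; split.
  - intros [S [[A ->] ->]]. exists A. apply fitD. intro a. rewrite sl_join_sub. split.
    + intros H x Ax. apply cls_sub. apply H. eauto.
    + intros H T [x [Ax ->]]. apply cls_sub. auto.
  - intros [A ->]. exists (sl_join L (fun T => exists a, A a /\ T = cls a)).
    split; [exists A; reflexivity|]. symmetry. apply fitD. intro a. rewrite sl_join_sub. split.
    + intros H x Ax. apply cls_sub. apply H. eauto.
    + intros H T [x [Ax ->]]. apply cls_sub. auto.
Qed.

Lemma main_sec :
  (Rfam L = Int (Cl L) /\
   Int (Cl L) = Booleanization rev_incl (Ex L) /\
   Booleanization rev_incl (Ex L) = Booleanization rev_incl (SE L) /\
   Booleanization rev_incl (SE L) = Booleanization rev_incl (Filt L)) /\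
  (fit_image L (Sc L) = Booleanization incl (fit_image L (Sb L)) /\
   Booleanization incl (fit_image L (Sb L)) = Booleanization incl (fitted L)).
Proof.
  rewrite Rfam_eq, Int_eq, Ex_eq, SE_eq, Filt_eq, Sc_eq, Sb_eq, fitted_eq. tauto.
Qed.

End Pf.

Theorem mainTheorem17 (L : Frame) :
  (Rfam L = Int (Cl L) /\
   Int (Cl L) = Booleanization rev_incl (Ex L) /\
   Booleanization rev_incl (Ex L) = Booleanization rev_incl (SE L) /\
   Booleanization rev_incl (SE L) = Booleanization rev_incl (Filt L)) /\
  (fit_image L (Sc L) = Booleanization incl (fit_image L (Sb L)) /\
   Booleanization incl (fit_image L (Sb L)) = Booleanization incl (fitted L)).
Proof. exact (@main_sec L). Qed.
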